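(* Consider the two-user scalar fading multiple access channel and the Stackelberg game described in the context. For every pair $(\mu_1,\mu_2)$ with $0\le\mu_1<\infty$, $0\le\mu_2<\infty$ and every $\epsilon>0$, an $\epsilon$-Stackelberg strategy exists.
   Context: Channel: $y=\sqrt{h_1}x_1+\sqrt{h_2}x_2+z$, noise variance $\sigma^2>0$; the fading $\mathbf h=(h_1,h_2)$ is stationary ergodic with a stationary distribution on $(0,\infty)^2$ having a continuous bounded density $f$; channel state is known everywhere. User $i$ has power budget $\bar P_i>0$ and feasible set $\mathcal F_i$ of measurable $\mathcal P_i\ge0$ with $E[\mathcal P_i(\mathbf h)]\le\bar P_i$. Stackelberg game: the base station (leader) announces a measurable set $D_1\subseteq(0,\infty)^2$; it then decodes user 1 first on $D_1$ and user 2 first on $D_1^c$. The users then play the low-level game with payoffs $\bar R_1(D_1,\mathcal P_1,\mathcal P_2)=\iint\tfrac12\log_2\Big(1+\frac{\mathcal P_1h_1}{\sigma^2+\mathcal P_2h_2I_{\{(h_1,h_2)\in D_1\}}}\Big)f\,dh_1dh_2$, $\bar R_2(D_1,\mathcal P_1,\mathcal P_2)=\iint\tfrac12\log_2\Big(1+\frac{\mathcal P_2h_2}{\sigma^2+\mathcal P_1h_1I_{\{(h_1,h_2)\in D_1^c\}}}\Big)f\,dh_1dh_2$. For each $D_1$ this low-level game has a unique admissible Nash equilibrium $(\mathcal P_{1D_1},\mathcal P_{2D_1})$ (a Nash equilibrium not Pareto-dominated in payoffs by another Nash equilibrium). The base station's payoff is $J(D_1)=\mu_1\bar R_1(D_1,\mathcal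 P_{1D_1},\mathcal P_{2D_1})+\mu_2\bar R_2(D_1,\mathcal P_{1D_1},\mathcal P_{2D_1})$. Let $R^*=\sup_{D_1}J(D_1)$. For $\epsilon>0$, a strategy $D_{1,\epsilon}^*$ is an $\epsilon$-Stackelberg strategy if $J(D_{1,\epsilon}^* )\ge R^*-\epsilon$. *)

(* Defs.v *)
From HB Require Import structures.
From mathcomp Require Import all_boot all_order all_algebra.
From mathcomp Require Import all_classical all_reals all_analysis.
Set Implicit Arguments. Unset Strict Implicit. Unset Printing Implicit Defensive.
Import Order.TTheory GRing.Theory Num.Theory.
Import numFieldNormedType.Exports.
Local Open Scope classical_set_scope.
Local Open Scope ring_scope.

Section MAC.
Variable R : realType.

Definition Hspace : set (R * R) := `]0, +oo[%classic `*` `]0, +oo[%classic.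

Definition leb2 := ((@lebesgue_measure R) \x (@lebesgue_measure R))%E.

Definition expect (f g : R * R -> R) : \bar R :=
  (\int[leb2]_(x in Hspace) (g x * f x)%:E)%E.

Definition half_log2_1p (x : R) : R := ln (1 + x) / (2 * ln 2).

Definition feasible (f : R * R -> R) (Pbar : R) (P : R * R -> R) : Prop :=
  measurable_fun Hspace P /\ (forall x, 0 <= P x) /\ (expect f P <= Pbar%:E)%E.

(* user 1 is decoded first on D1 (sees interference of user 2 there) *)
Definition rate1 (f : R * R -> R) (sigma2 : R) (D1 : set (R * R))
  (P1 P2 : R * R -> R) : \bar R :=
  expect f (fun x => half_log2_1p
    (P1 x * x.1 / (sigma2 + (if x \in D1 then P2 x * x.2 else 0)))).

(* user 2 is decoded first on the complement of D1 *)
Definition rate2 (f : R * R -> R) (sigma2 : R) (D1 : set (R * R))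
  (P1 P2 : R * R -> R) : \bar R :=
  expect f (fun x => half_log2_1p
    (P2 x * x.2 / (sigma2 + (if x \in ~` D1 then P1 x * x.1 else 0)))).

Definition nash (f : R * R -> R) (sigma2 Pbar1 Pbar2 : R) (D1 : set (R * R))
  (P1 P2 : R * R -> R) : Prop :=
  feasible f Pbar1 P1 /\ feasible f Pbar2 P2 /\
  (forall Q1, feasible f Pbar1 Q1 ->
     (rate1 f sigma2 D1 Q1 P2 <= rate1 f sigma2 D1 P1 P2)%E) /\
  (forall Q2, feasible f Pbar2 Q2 ->
     (rate2 f sigma2 D1 P1 Q2 <= rate2 f sigma2 D1 P1 P2)%E).

Definition admissible_nash (f : R * R -> R) (sigma2 Pbar1 Pbar2 : R)
  (D1 : set (R * R)) (P1 P2 : R * R -> R) : Prop :=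
  nash f sigma2 Pbar1 Pbar2 D1 P1 P2 /\
  ~ (exists Q1 Q2, nash f sigma2 Pbar1 Pbar2 D1 Q1 Q2 /\
       (rate1 f sigma2 D1 P1 P2 <= rate1 f sigma2 D1 Q1 Q2)%E /\
       (rate2 f sigma2 D1 P1 P2 <= rate2 f sigma2 D1 Q1 Q2)%E /\
       ((rate1 f sigma2 D1 P1 P2 < rate1 f sigma2 D1 Q1 Q2)%E \/
        (rate2 f sigma2 D1 P1 P2 < rate2 f sigma2 D1 Q1 Q2)%E)).

Definition leader_strategy (D1 : set (R * R)) : Prop :=
  measurable D1 /\ D1 `<=` Hspace.

Definition bs_payoff (f : R * R -> R) (sigma2 mu1 mu2 : R) (D1 : set (R * R))
  (P1 P2 : R * R -> R) : \bar R :=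
  (mu1%:E * rate1 f sigma2 D1 P1 P2 + mu2%:E * rate2 f sigma2 D1 P1 P2)%E.

Definition Rstar (f : R * R -> R) (sigma2 Pbar1 Pbar2 mu1 mu2 : R) : \bar R :=
  ereal_sup [set v | exists D1 P1 P2, leader_strategy D1 /\
     admissible_nash f sigma2 Pbar1 Pbar2 D1 P1 P2 /\
     v = bs_payoff f sigma2 mu1 mu2 D1 P1 P2].

Definition fading_density (f : R * R -> R) : Prop :=
  (forall x, 0 <= f x) /\ measurable_fun Hspace f /\
  {within Hspace, continuous f} /\ (exists M : R, forall x, `|f x| <= M) /\
  (\int[leb2]_(x in Hspace) (f x)%:E = 1)%E.

End MAC.

(* Main.v *)
Require Import Defs.
From HB Require Import structures.
From mathcomp Require Import all_boot all_order all_algebra.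
From mathcomp Require Import all_classical all_reals all_analysis.
From mathcomp Require Import measurable_realfun.
Import Order.TTheory GRing.Theory Num.Theory.
Local Open Scope classical_set_scope.
Local Open Scope ring_scope.

Lemma ln2_gt0 (R : realType) : 0 < ln (2 : R).
Proof. by apply: ln_gt0; rewrite ltr1n. Qed.

Lemma hl_ge0 (R : realType) (x : R) : 0 <= x -> 0 <= half_log2_1p x.
Proof.
move=> x0; rewrite /half_log2_1p divr_ge0 //.
  by apply: ln_ge0; rewrite lerDl.
by rewrite mulr_ge0 // ltW // ln2_gt0.
Qed.

Lemma hl_le (R : realType) (x y : R) : 0 <= x -> x <= y ->
  half_log2_1p x <= half_log2_1p y.
Proof.
move=> x0 xy; rewrite /half_log2_1p ler_pM2r; last first.
  by rewrite invr_gt0 mulr_gt0 // ln2_gt0.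
rewrite ler_ln ?posrE ?lerD2l //.
  by rewrite (lt_le_trans ltr01) // lerDl.
by rewrite (lt_le_trans ltr01) // lerDl (le_trans x0).
Qed.

Lemma hl_eq (R : realType) (a b : R) : 0 < b -> 0 <= a ->
  half_log2_1p (a / b) = (ln (b + a) - ln b) / (2 * ln 2).
Proof.
move=> b0 a0; rewrite /half_log2_1p; congr (_ / _).
have -> : 1 + a / b = (b + a) * b^-1 by rewrite mulrDl divff ?gt_eqF.
rewrite lnM ?lnV ?posrE ?invr_gt0 //.
by rewrite (lt_le_trans b0) // lerDl.
Qed.

Lemma mHspace (R : realType) : measurable (@Hspace R).
Proof. by apply: measurableX; apply: measurable_itv. Qed.

Lemma mint (R : realType) (f : R * R -> R) (s : R) (D : set (R * R))
  (a c : R * R -> R) : fading_density f -> 0 < s -> measurable D ->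
  measurable_fun (@Hspace R) a -> measurable_fun (@Hspace R) c ->
  (forall x, @Hspace R x -> 0 <= a x) -> (forall x, @Hspace R x -> 0 <= c x) ->
  measurable_fun (@Hspace R)
    (fun x => (half_log2_1p (a x / (s + (if x \in D then c x else 0))) * f x)%:E).
Proof.
move=> [_ [mf _]] s0 mD ma mc a0 c0.
apply/measurable_EFinP.
apply: (@eq_measurable_fun _ _ _ _ (@Hspace R) (fun x => (ln (s + \1_D x * c x + a x) - ln (s + \1_D x * c x)) / (2 * ln 2) * f x)).
  move=> x; rewrite inE => Hx /=; rewrite indicE.
  case: (x \in D); rewrite ?mul1r ?mul0r ?addr0 ?hl_eq ?a0 //.
  by rewrite (lt_le_trans s0) // lerDl c0.
have mL1 : measurable_fun (@Hspace R) (fun x => ln (s + \1_D x * c x + a x)).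
  apply: measurableT_comp; first exact: measurable_ln.
  apply: measurable_funD => //; apply: measurable_funD; first exact: measurable_cst.
  by apply: measurable_funM => //; apply: measurable_indic.
have mL2 : measurable_fun (@Hspace R) (fun x => ln (s + \1_D x * c x)).
  apply: measurableT_comp; first exact: measurable_ln.
  apply: measurable_funD; first exact: measurable_cst.
  by apply: measurable_funM => //; apply: measurable_indic.
have mB := measurable_funB mL1 mL2.
have mC := measurable_funM mB (measurable_cst (T1 := _) (2 * ln (2:R))^-1 : measurable_fun (@Hspace R) _).
exact: (measurable_funM mC mf).
Qed.

Lemma rate_le (R : realType) (f : R * R -> R) (s : R) (D : set (R * R))
  (a c : R * R -> R) : fading_density f -> 0 < s -> measurable D ->
  measurable_fun (@Hspace R) a -> measurable_fun (@Hspace R) c ->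
  (forall x, @Hspace R x -> 0 <= a x) -> (forall x, @Hspace R x -> 0 <= c x) ->
  (expect f (fun x => half_log2_1p (a x / (s + (if x \in D then c x else 0%R))))
   <= expect f (fun x => half_log2_1p (a x / (s + (if x \in set0 then c x else 0%R)))))%E.
Proof.
move=> hf s0 mD ma mc a0 c0.
have f0 := hf.1.
rewrite /expect; apply: ge0_le_integral.
- exact: mHspace.
- move=> x Hx; rewrite lee_fin mulr_ge0 // hl_ge0 // divr_ge0 ?a0 //.
  by apply: addr_ge0; [exact: ltW | case: (x \in D); rewrite ?c0].
- exact: mint.
- exact: mint.
- move=> x Hx; rewrite lee_fin ler_wpM2r // hl_le //.
    by rewrite divr_ge0 ?a0 //; apply: addr_ge0; [exact: ltW | case: (x \in D); rewrite ?c0].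
  rewrite in_set0 addr0 ler_wpM2l ?a0 // lef_pV2 ?posrE //.
  + by case: (x \in D); rewrite ?lerDl ?c0.
  + by rewrite (lt_le_trans s0) //; case: (x \in D); rewrite ?lerDl ?c0.
Qed.

Lemma Hpos (R : realType) (x : R * R) : @Hspace R x -> 0 < x.1 /\ 0 < x.2.
Proof. by case=> /=; rewrite !in_itv /= !andbT. Qed.
Arguments Hpos {R x}.

Lemma r1_set0 (R : realType) f (s : R) Q P P' :
  rate1 f s set0 Q P = rate1 f s set0 Q P'.
Proof. by rewrite /rate1 /expect; apply: eq_integral => x _; rewrite !in_set0. Qed.

Lemma r2_H (R : realType) f (s : R) Q P P' :
  rate2 f s (@Hspace R) P Q = rate2 f s (@Hspace R) P' Q.
Proof.
rewrite /rate2 /expect; apply: eq_integral => x; rewrite inE => Hx.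
by rewrite in_setC mem_set.
Qed.

Lemma r1_ge0 (R : realType) f (s : R) D P1 P2 : fading_density f -> 0 < s ->
  (forall x, 0 <= P1 x) -> (forall x, 0 <= P2 x) ->
  (0 <= rate1 f s D P1 P2)%E.
Proof.
move=> [f0 _] s0 p1 p2; apply: integral_ge0 => x Hx.
have [h1 h2] := Hpos Hx.
rewrite lee_fin mulr_ge0 // hl_ge0 // divr_ge0 //; first by rewrite mulr_ge0 // ltW.
apply: addr_ge0; first exact: ltW.
by case: (x \in D) => //; apply: mulr_ge0 => //; exact: ltW.
Qed.

Lemma r2_ge0 (R : realType) f (s : R) D P1 P2 : fading_density f -> 0 < s ->
  (forall x, 0 <= P1 x) -> (forall x, 0 <= P2 x) ->
  (0 <= rate2 f s D P1 P2)%E.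
Proof.
move=> [f0 _] s0 p1 p2; apply: integral_ge0 => x Hx.
have [h1 h2] := Hpos Hx.
rewrite lee_fin mulr_ge0 // hl_ge0 // divr_ge0 //; first by rewrite mulr_ge0 // ltW.
apply: addr_ge0; first exact: ltW.
by case: (x \in ~` D) => //; apply: mulr_ge0 => //; exact: ltW.
Qed.

Lemma mfst (R : realType) : measurable_fun (@Hspace R) fst.
Proof. by apply: (measurable_funS _ (subsetT _) measurable_fst). Qed.

Lemma msnd (R : realType) : measurable_fun (@Hspace R) snd.
Proof. by apply: (measurable_funS _ (subsetT _) measurable_snd). Qed.

Lemma r1_le (R : realType) (f : R * R -> R) (s : R) (D : set (R * R)) (P1 P2 : R * R -> R) : fading_density f -> 0 < s ->
  measurable D ->
  measurable_fun (@Hspace R) P1 -> measurable_fun (@Hspace R) P2 ->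
  (forall x, 0 <= P1 x) -> (forall x, 0 <= P2 x) ->
  (rate1 f s D P1 P2 <= rate1 f s set0 P1 P2)%E.
Proof.
move=> hf s0 mD m1 m2 p1 p2.
apply: (@rate_le R f s D (fun x => P1 x * x.1) (fun x => P2 x * x.2)) => //.
- exact: measurable_funM m1 (mfst R).
- exact: measurable_funM m2 (msnd R).
- by move=> x /Hpos [h1 h2]; apply: mulr_ge0 => //; exact: ltW.
- by move=> x /Hpos [h1 h2]; apply: mulr_ge0 => //; exact: ltW.
Qed.

Lemma r2_le (R : realType) (f : R * R -> R) (s : R) (D : set (R * R)) (P1 P2 : R * R -> R) : fading_density f -> 0 < s ->
  measurable D ->
  measurable_fun (@Hspace R) P1 -> measurable_fun (@Hspace R) P2 ->
  (forall x, 0 <= P1 x) -> (forall x, 0 <= P2 x) ->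
  (rate2 f s D P1 P2 <= rate2 f s (@Hspace R) P1 P2)%E.
Proof.
move=> hf s0 mD m1 m2 p1 p2.
apply: le_trans.
  apply: (@rate_le R f s (~` D) (fun x => P2 x * x.2) (fun x => P1 x * x.1)) => //.
  - exact: measurableC.
  - exact: measurable_funM m2 (msnd R).
  - exact: measurable_funM m1 (mfst R).
  - by move=> x /Hpos [h1 h2]; apply: mulr_ge0 => //; exact: ltW.
  - by move=> x /Hpos [h1 h2]; apply: mulr_ge0 => //; exact: ltW.
rewrite le_eqVlt; apply/orP; left; apply/eqP.
rewrite /rate2 /expect; apply: eq_integral => x; rewrite inE => Hx.
by rewrite in_set0 in_setC mem_set.
Qed.
Theorem corollary1 (R : realType) (f : R * R -> R) (sigma2 Pbar1 Pbar2 : R)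
  (Hf : fading_density f) (Hsigma : 0 < sigma2)
  (HP1 : 0 < Pbar1) (HP2 : 0 < Pbar2)
  (* standing fact of the context: for each D1 the low-level game has a
     unique admissible Nash equilibrium (so J(D1) is well defined) *)
  (Hex : forall D1, leader_strategy D1 ->
     exists P1 P2, admissible_nash f sigma2 Pbar1 Pbar2 D1 P1 P2)
  (Huniq : forall D1 P1 P2 Q1 Q2, leader_strategy D1 ->
     admissible_nash f sigma2 Pbar1 Pbar2 D1 P1 P2 ->
     admissible_nash f sigma2 Pbar1 Pbar2 D1 Q1 Q2 ->
     rate1 f sigma2 D1 P1 P2 = rate1 f sigma2 D1 Q1 Q2 /\
     rate2 f sigma2 D1 P1 P2 = rate2 f sigma2 D1 Q1 Q2)
  (mu1 mu2 : R) (Hmu1 : 0 <= mu1) (Hmu2 : 0 <= mu2)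
  (eps : R) (Heps : 0 < eps) :
  exists D1, leader_strategy D1 /\
    forall P1 P2, admissible_nash f sigma2 Pbar1 Pbar2 D1 P1 P2 ->
      (Rstar f sigma2 Pbar1 Pbar2 mu1 mu2 - eps%:E
         <= bs_payoff f sigma2 mu1 mu2 D1 P1 P2)%E.

Proof.
have feasP : forall Pb P, feasible f Pb P ->
    measurable_fun (@Hspace R) P /\ (forall x, 0 <= P x).
  by move=> Pb P [mP [P0 _]].
pose S1 := ereal_sup [set v | exists Q, feasible f Pbar1 Q /\
  v = rate1 f sigma2 set0 Q (fun _ => 0)].
pose S2 := ereal_sup [set v | exists Q, feasible f Pbar2 Q /\
  v = rate2 f sigma2 (@Hspace R) (fun _ => 0) Q].
have ls0 : leader_strategy (@set0 (R * R)) by split; [exact: measurable0 | exact: sub0set].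
have lsH : leader_strategy (@Hspace R) by split; [exact: mHspace | exact: subset_refl].
have [[mu1p S1y]|nA] := pselect (0 < mu1 /\ S1 = +oo%E).
  exists set0; split => // P1 P2 [[F1 [F2 [N1 N2]]] _].
  have r1y : rate1 f sigma2 set0 P1 P2 = +oo%E.
    apply/eqP; rewrite eq_le leey /= -S1y; apply: ge_ereal_sup => v [Q [FQ ->]].
    by rewrite (r1_set0 _ _ _ _ _ P2); apply: N1.
  have [_ p2] := feasP _ _ F2; have [_ p1] := feasP _ _ F1.
  have r2n := @r2_ge0 R f sigma2 set0 P1 P2 Hf Hsigma p1 p2.
  have h : (0 <= mu2%:E * rate2 f sigma2 set0 P1 P2)%E by apply: mule_ge0; rewrite ?lee_fin.
  rewrite /bs_payoff r1y mulry gtr0_sg // mul1e addye ?leey //.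
  by rewrite gt_eqF // (lt_le_trans _ h) // ltNyr.
have [[mu2p S2y]|nB] := pselect (0 < mu2 /\ S2 = +oo%E).
  exists (@Hspace R); split => // P1 P2 [[F1 [F2 [N1 N2]]] _].
  have r2y : rate2 f sigma2 (@Hspace R) P1 P2 = +oo%E.
    apply/eqP; rewrite eq_le leey /= -S2y; apply: ge_ereal_sup => v [Q [FQ ->]].
    by rewrite (r2_H _ _ _ _ _ P1); apply: N2.
  have [_ p2] := feasP _ _ F2; have [_ p1] := feasP _ _ F1.
  have r1n := @r1_ge0 R f sigma2 (@Hspace R) P1 P2 Hf Hsigma p1 p2.
  have h : (0 <= mu1%:E * rate1 f sigma2 (@Hspace R) P1 P2)%E by apply: mule_ge0; rewrite ?lee_fin.
  rewrite /bs_payoff r2y mulry gtr0_sg // mul1e addey ?leey //.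
  by rewrite gt_eqF // (lt_le_trans _ h) // ltNyr.
pose B := (mu1%:E * S1 + mu2%:E * S2)%E.
have Bfin : (B < +oo)%E.
  apply: lte_add_pinfty.
    have [->|mu1n] := eqVneq mu1 0; first by rewrite mul0e ltry.
    apply: lte_mul_pinfty; rewrite ?lee_fin //; rewrite ltey; apply/eqP => S1y.
    by apply: nA; split => //; rewrite lt_neqAle eq_sym mu1n.
  have [->|mu2n] := eqVneq mu2 0; first by rewrite mul0e ltry.
  apply: lte_mul_pinfty; rewrite ?lee_fin //; rewrite ltey; apply/eqP => S2y.
  by apply: nB; split => //; rewrite lt_neqAle eq_sym mu2n.
have RB : (Rstar f sigma2 Pbar1 Pbar2 mu1 mu2 <= B)%E.
  apply: ge_ereal_sup => v [D1 [P1 [P2 [[mD _] [[[F1 [F2 _]] _] ->]]]]].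
  have [m1 p1] := feasP _ _ F1; have [m2 p2] := feasP _ _ F2.
  apply: leeD; apply: lee_wpmul2l; rewrite ?lee_fin //.
    apply: le_trans (@r1_le R f sigma2 D1 P1 P2 Hf Hsigma mD m1 m2 p1 p2) _.
    apply: ereal_sup_ubound; exists P1; split => //.
    exact: r1_set0.
  apply: le_trans (@r2_le R f sigma2 D1 P1 P2 Hf Hsigma mD m1 m2 p1 p2) _.
  apply: ereal_sup_ubound; exists P2; split => //.
  exact: r2_H.
set RS := Rstar _ _ _ _ _ _ in RB *.
have : RS \is a fin_num \/ RS = -oo%E.
  clearbody RS; case: RS RB => [r| |] RB; [by left | exfalso | by right].
  by have := le_lt_trans RB Bfin; rewrite ltxx.
case=> [RSf|->]; last first.
  by exists set0; split => // P1 P2 _; rewrite addNye leNye.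
have [v [D1 [P1 [P2 [LS [AN ->]]]]] vlt] := ub_ereal_sup_adherent Heps RSf.
exists D1; split => // Q1 Q2 AQ.
have [e1 e2] := Huniq D1 P1 P2 Q1 Q2 LS AN AQ.
by rewrite /bs_payoff -e1 -e2 ltW.
Qed.
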